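(* Fix a constant $c\ge 10$. Consider the random pairwise load balancing process on $n\ge2$ nodes with arbitrary initial load vector, and let $T_2$ be the first time $t\ge T_1$ with $\max_i\ell_i(t)\le\varnothing+2c$ and $\min_i\ell_i(t)\ge\varnothing-2c$. Let $T_3$ be the first time $t\ge T_2$ such that $\max_{1\le i\le n}\ell_i(t)\le \mathrm{round}(\varnothing)+1$ and $\min_{1\le i\le n}\ell_i(t)\ge\mathrm{round}(\varnothing)-1$. Then with high probability (probability $1-O(1/n)$), $T_3=T_2+O(n\log n)$, where the constant in $O(\cdot)$ depends only on $c$.
   Context: Random pairwise load balancing process: $n$ nodes, $m$ tokens, load vector $\ell(t)\in\mathbb{Z}^n$. In each time step $t$, independently, an ordered pair $(u,v)$ of distinct nodes is chosen uniformly at random and loads become $\ell_u(t+1)=\lceil(\ell_u(t)+\ell_v(t))/2\rceil$, $\ell_v(t+1)=\lfloor(\ell_u(t)+\ell_v(t))/2\rfloor$. Average load $\varnothing=m/n$; $\mathrm{round}(\varnothing)$ is $\varnothing$ rounded to the nearest integer; potential $\Phi(\ell)=\sum_i(\ell_i-\varnothing)^2$; $T_1$ is the first time $t$ with $\Phi(\ell(t))<n$. *)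

(* Defs.v *)
From HB Require Import structures.
From mathcomp Require Import all_boot all_order all_algebra.
Set Implicit Arguments. Unset Strict Implicit. Unset Printing Implicit Defensive.
Import Order.TTheory GRing.Theory Num.Theory.
Local Open Scope ring_scope.

Definition loadv (n : nat) := 'I_n -> int.

Definition pairn (n : nat) := ('I_n * 'I_n)%type.

(* One balancing step on the ordered pair (u,v):
   l_u <- ceil((l_u+l_v)/2), l_v <- floor((l_u+l_v)/2).
   (%/ on int is floor division for positive divisor.) *)
Definition step n (l : loadv n) (p : pairn n) : loadv n :=
  fun i => if i == p.1 then ((l p.1 + l p.2 + 1) %/ 2)%Z
           else if i == p.2 then ((l p.1 + l p.2) %/ 2)%Z
           else l i.

Definition traj n (l0 : loadv n) (s : seq (pairn n)) (t : nat) : loadv n :=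
  foldl (@step n) l0 (take t s).

Definition avg (R : numFieldType) n (l : loadv n) : R :=
  (\sum_(i < n) l i)%:~R / n%:R.

Definition Phi (R : numFieldType) n (l : loadv n) : R :=
  \sum_(i < n) ((l i)%:~R - avg R l) ^+ 2.

(* round(x): nearest integer, ties rounded up. *)
Definition roundR (R : archiRealFieldType) (x : R) : int := Num.floor (x + 2^-1).

Definition cond1 (R : numFieldType) n (l : loadv n) : bool := Phi R l < n%:R.
Definition cond2 (R : numFieldType) (c : R) n (l : loadv n) : bool :=
  [forall i, ((l i)%:~R <= avg R l + 2 * c) && (avg R l - 2 * c <= (l i)%:~R)].
Definition cond3 (R : archiRealFieldType) n (l : loadv n) : bool :=
  [forall i, (l i <= roundR (avg R l) + 1) && (roundR (avg R l) - 1 <= l i)].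

Definition first_from (P : nat -> bool) (a t : nat) : bool :=
  [&& a <= t, P t & [forall j : 'I_t, (a <= j) ==> ~~ P j]]%N.

Definition isT1 (R : numFieldType) n (l0 : loadv n) s (t : nat) : bool :=
  first_from (fun u => cond1 R (traj l0 s u)) 0 t.
Definition isT2 (R : numFieldType) (c : R) n (l0 : loadv n) s (t2 : nat) : bool :=
  [exists t1 : 'I_t2.+1, isT1 R l0 s t1 &&
     first_from (fun u => cond2 c (traj l0 s u)) t1 t2].

(* Bad event on a prefix of length N + D of the random sequence:
   T2 <= N and T3 > T2 + D (no time in [T2, T2+D] satisfies cond3). *)
Definition bad (R : archiRealFieldType) (c : R) n (l0 : loadv n) (N D : nat)
  (s : seq (pairn n)) : bool :=
  [exists t2 : 'I_N.+1, isT2 c l0 s t2 &&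
     [forall k : 'I_D.+1, ~~ cond3 R (traj l0 s (t2 + k))]].

Definition valid n (s : seq (pairn n)) : bool := all (fun p => p.1 != p.2) s.

(* Probability of an event for L steps, each pair i.i.d. uniform among
   ordered pairs of distinct nodes: uniform counting measure on valid
   L-tuples. *)
Definition prob n (L : nat) (E : pred (seq (pairn n))) : rat :=
  #|[set s : L.-tuple (pairn n) | valid s && E s]|%:R /
  #|[set s : L.-tuple (pairn n) | valid s]|%:R.

(* Main.v *)
Require Import Defs.
From HB Require Import structures.
From mathcomp Require Import all_boot all_order all_algebra.
From mathcomp Require Import zify ring lra.
Import Order.TTheory GRing.Theory Num.Theory.
Local Open Scope ring_scope.


Section TS.
Variables (T : finType) (P : pred T).

Definition TW (L : nat) (F : seq T -> rat) : rat :=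
  \sum_(s : L.-tuple T | all P s) F s.

Lemma TW0 F : TW 0 F = F [::].
Proof.
rewrite /TW (big_pred1 [tuple]) //= => s.
by rewrite tuple0 /= [RHS]eqxx.
Qed.

Lemma TWS L F : TW L.+1 F = \sum_(x | P x) TW L (fun s => F (x :: s)).
Proof.
rewrite /TW pair_big_dep /=.
rewrite (reindex (fun u : T * L.-tuple T => [tuple of u.1 :: u.2])) /=.
  by apply: eq_bigl => -[x t].
exists (fun u : L.+1.-tuple T => (thead u, [tuple of behead u])) => /=.
  by move=> [x t] _ /=; congr pair; apply: val_inj.
move=> u _; apply: val_inj => /=; case: u => -[|a s] //=.
Qed.

Lemma TW_eq L F G : (forall s, size s = L -> all P s -> F s = G s) ->
  TW L F = TW L G.
Proof. by move=> H; apply: eq_bigr => s Ps; apply: H => //; rewrite size_tuple. Qed.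

Lemma TW_le L F G : (forall s, size s = L -> all P s -> F s <= G s) ->
  TW L F <= TW L G.
Proof. by move=> H; apply: ler_sum => s Ps; apply: H => //; rewrite size_tuple. Qed.

Lemma TW_ge0 L F : (forall s, size s = L -> all P s -> 0 <= F s) -> 0 <= TW L F.
Proof. by move=> H; apply: sumr_ge0 => s Ps; apply: H => //; rewrite size_tuple. Qed.

Lemma TW_scale L a F : TW L (fun s => a * F s) = a * TW L F.
Proof. by rewrite /TW mulr_sumr. Qed.

Lemma TW_sum (I : finType) L (F : I -> seq T -> rat) :
  TW L (fun s => \sum_i F i s) = \sum_i TW L (F i).
Proof. by rewrite /TW exchange_big. Qed.

Lemma TW_split a b F : TW (a + b) F = TW a (fun s1 => TW b (fun s2 => F (s1 ++ s2))).
Proof.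
elim: a F => [|a IH] F; first by rewrite TW0.
change (TW (a + b).+1 F = TW a.+1 (fun s1 => TW b (fun s2 => F (s1 ++ s2)))).
by rewrite !TWS; apply: eq_bigr => x _; rewrite IH.
Qed.

Definition Qc := \sum_(x | P x) (1 : rat).

Lemma TW_const L k : TW L (fun _ => k) = Qc ^+ L * k.
Proof.
elim: L k => [|L IH] k; first by rewrite TW0 expr0 mul1r.
rewrite TWS; under eq_bigr do rewrite IH.
by rewrite /Qc exprS -mulrA mulr_suml; apply: eq_bigr => *; rewrite mul1r.
Qed.

Lemma Qc_ge0 : 0 <= Qc.
Proof. by apply: sumr_ge0. Qed.
End TS.
Arguments TW {T} P L F. Arguments Qc {T} P.


Definition g (m : nat) : nat := if (1 < m)%N then (4 ^ m)%N else 0%N.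

Lemma g_step m : (4 * g m <= g m.+1)%N.
Proof.
by rewrite /g; case: m => [|[|m]] //=; rewrite expnS.
Qed.

Lemma g_mono m k : (m <= k)%N -> (g m <= g k)%N.
Proof.
move=> /subnKC <-; elim: (k - m)%N => [|t IH]; first by rewrite addn0.
rewrite addnS; apply: leq_trans IH _; apply: leq_trans (g_step _); lia.
Qed.

Lemma g_conv m : (2 * g m.+1 <= g m + g m.+2)%N.
Proof.
rewrite /g; case: m => [|[|m]] //=.
rewrite !expnS; lia.
Qed.

Definition hh (d : int) : nat := g (absz (d)).

Lemma hh_conv (k : int) : (2 * hh (k + 1) <= hh k + hh (k + 2))%N.
Proof.
rewrite /hh.
case: (lerP 0 k) => hk.
  have -> : (absz (k + 1)) = ((absz (k))).+1 by lia.
  have -> : (absz (k + 2)) = ((absz (k))).+2 by lia.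
  exact: g_conv.
case: (eqVneq k (-1)) => [->|hk1] //=.
have -> : (absz (k)) = ((absz (k + 2))).+2 by lia.
have -> : (absz (k + 1)) = ((absz (k + 2))).+1 by lia.
by rewrite addnC; apply: g_conv.
Qed.

Lemma hh_incr (x y : int) : x <= y ->
  ((hh (x + 1))%:Z - (hh x)%:Z <= (hh (y + 1))%:Z - (hh y)%:Z)%R.
Proof.
move=> hxy.
have [t ht] : exists t : nat, y = x + t%:Z by exists (absz (y - x)); lia.
rewrite ht {ht hxy}; elim: t => [|t IH]; first by rewrite addr0.
apply: le_trans IH _.
have := hh_conv (x + t%:Z).
have -> : x + t.+1%:Z = x + t%:Z + 1 by lia.
have -> : x + t%:Z + 1 + 1 = x + t%:Z + 2 by lia.
lia.
Qed.

Lemma hh_pair_le (x y : int) : x + 1 <= y - 1 ->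
  (hh (x + 1) + hh (y - 1) <= hh x + hh y)%N.
Proof.
move=> h.
have := @hh_incr x (y - 1) ltac:(lia).
have -> : y - 1 + 1 = y by lia.
lia.
Qed.

Lemma hh_avg (x y : int) :
  (hh ((x + y + 1) %/ 2)%Z + hh ((x + y) %/ 2)%Z <= hh x + hh y)%N.
Proof.
wlog hxy : x y / x <= y.
  move=> W; case: (lerP x y) => h; first exact: W.
  by have := W y x (ltW h); rewrite (addrC y x) [(hh y + _)%N]addnC.
have [t ht] : exists t : nat, y = x + t%:Z by exists (absz (y - x)); lia.
rewrite ht {ht hxy}.
elim: t {-2}t (leqnn t) x => [|T IH] t ht x.
  have -> : t = 0%N by lia.
  have -> : ((x + (x + 0%:Z) + 1) %/ 2)%Z = x by lia.
  have -> : ((x + (x + 0%:Z)) %/ 2)%Z = x by lia.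
  by rewrite addr0.
case: t ht => [|[|t]] ht.
- have -> : ((x + (x + 0%:Z) + 1) %/ 2)%Z = x by lia.
  have -> : ((x + (x + 0%:Z)) %/ 2)%Z = x by lia.
  by rewrite addr0.
- have -> : ((x + (x + 1%:Z) + 1) %/ 2)%Z = x + 1 by lia.
  have -> : ((x + (x + 1%:Z)) %/ 2)%Z = x by lia.
  by rewrite addnC.
have E1 : x + (x + t.+2%:Z) = (x + 1) + ((x + 1) + t%:Z) by lia.
rewrite E1.
apply: leq_trans (IH t _ (x + 1)) _; first lia.
have := hh_pair_le x (x + t.+2%:Z).
have -> : x + t.+2%:Z - 1 = x + 1 + t%:Z by lia.
move=> H; apply: H; lia.
Qed.

Lemma hh_progress (x y : int) :
  (2 <= x /\ y <= 0) \/ (x <= -2 /\ 0 <= y) ->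
  (hh x + 2 * (hh ((x + y + 1) %/ 2)%Z + hh ((x + y) %/ 2)%Z) <= 2 * (hh x + hh y))%N.
Proof.
move=> H.
set z := maxn (absz (x)) (absz (y)).
have hz : (2 <= z)%N by rewrite /z; lia.
have hp : ((absz (((x + y + 1) %/ 2)%Z)) <= z.-1)%N by rewrite /z; lia.
have hq : ((absz (((x + y) %/ 2)%Z)) <= z.-1)%N by rewrite /z; lia.
have gp := @g_mono _ _ hp; have gq := @g_mono _ _ hq.
have gs : (4 * g z.-1 <= g z)%N.
  by have := g_step z.-1; rewrite prednK //; apply: leq_trans hz.
have gz : (g z <= hh x + hh y)%N.
  rewrite /hh; case: (leqP (absz (x)) (absz (y))) => h.
    have -> : z = absz y by rewrite /z; lia.
    exact: leq_addl.
  have -> : z = absz x by rewrite /z; lia.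
  exact: leq_addr.
rewrite /hh in gz *; lia.
Qed.

Set Implicit Arguments. Unset Strict Implicit. Unset Printing Implicit Defensive.

Lemma sum_two (V : comRingType) n (f g : 'I_n -> V) (u v : 'I_n) : u != v ->
  (forall i, i != u -> i != v -> g i = f i) ->
  \sum_i g i = \sum_i f i + (g u - f u) + (g v - f v).
Proof.
move=> uv H.
rewrite (bigD1 u) //= (bigD1 u (P := xpredT)) //=.
rewrite (bigD1 v) /=; last by rewrite eq_sym uv.
rewrite (bigD1 v (P := fun i => i != u)) /=; last by rewrite eq_sym uv.
rewrite (eq_bigr (fun i => f i)); last by move=> i /andP[iu iv]; apply: H.
rewrite /=; set X := \sum_(i | _) f i.
ring.
Qed.

Lemma step_other n (x : loadv n) (p : pairn n) i : i != p.1 -> i != p.2 -> step x p i = x i.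
Proof. by rewrite /step => /negPf -> /negPf ->. Qed.

Lemma step_u n (x : loadv n) (p : pairn n) : step x p p.1 = ((x p.1 + x p.2 + 1) %/ 2)%Z.
Proof. by rewrite /step eqxx. Qed.

Lemma step_v n (x : loadv n) (p : pairn n) : p.1 != p.2 -> step x p p.2 = ((x p.1 + x p.2) %/ 2)%Z.
Proof. by rewrite /step eq_sym => /negPf ->; rewrite eqxx. Qed.

Definition sumL n (x : loadv n) : int := \sum_i x i.

Lemma sumL_step n (x : loadv n) p : p.1 != p.2 -> sumL (step x p) = sumL x.
Proof.
move=> h; rewrite /sumL (sum_two h (f := x)); last by move=> i; apply: step_other.
rewrite step_u step_v //; move: (\sum_i x i) (x p.1) (x p.2) => S a b; lia.
Qed.

Lemma sumL_fold n (x : loadv n) s : valid s -> sumL (foldl (@step n) x s) = sumL x.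
Proof.
elim: s x => [|p s IH] x //= /andP[hp hs].
by rewrite IH // sumL_step.
Qed.

Lemma avg_fold (R : numFieldType) n (x : loadv n) s : valid s ->
  avg R (foldl (@step n) x s) = avg R x.
Proof. by move=> hs; rewrite /avg; have := sumL_fold x hs; rewrite /sumL => ->. Qed.

Lemma round_bounds (R : archiRealFieldType) n (S : int) : (0 < n)%N ->
  let r := roundR (S%:~R / n%:R : R) in
  (2 * (n%:Z) * r <= 2 * S + n%:Z) /\ (2 * S + n%:Z < 2 * n%:Z * r + 2 * n%:Z).
Proof.
move=> n0 r.
have h1 : (r%:~R : R) <= S%:~R / n%:R + 2^-1 by apply: floor_le.
have h2 : S%:~R / n%:R + 2^-1 < ((r + 1)%:~R : R).
  by rewrite -floor_lt_int /r /roundR ltzD1.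
set s := S%:~R / n%:R in h1 h2.
have hn : (0 : R) < n%:R by rewrite ltr0n.
have hS : (S%:~R : R) = s * n%:R by rewrite /s mulfVK // gt_eqF.
rewrite intrD in h2.
split.
  rewrite -(ler_int R) !intrD !intrM hS /=.
  have -> : ((n%:Z)%:~R : R) = n%:R by [].
  nra.
rewrite -(ltr_int R) !intrD !intrM hS /=.
have -> : ((n%:Z)%:~R : R) = n%:R by [].
nra.
Qed.


Section Drift.
Variable R : archiRealFieldType.

Definition rr n (x : loadv n) : int := roundR (avg R x).
Definition Inv (M : nat) n (x : loadv n) := forall i, (absz (x i - rr x) <= M)%N.
Definition Psi n (x : loadv n) : rat := \sum_i (hh (x i - rr x))%:R.

Lemma rr_step n (x : loadv n) p : p.1 != p.2 -> rr (step x p) = rr x.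
Proof.
by move=> h; rewrite /rr (avg_fold R x (s := [:: p])) //= h.
Qed.

Lemma rr_fold n (x : loadv n) s : valid s -> rr (foldl (@step n) x s) = rr x.
Proof. by move=> h; rewrite /rr avg_fold. Qed.

Lemma Inv_step M n (x : loadv n) p : p.1 != p.2 -> Inv M x -> Inv M (step x p).
Proof.
move=> h I i; rewrite rr_step //.
have Iu := I p.1; have Iv := I p.2; have Ii := I i.
case: (eqVneq i p.1) => [->|i1]; first by rewrite step_u; move: Iu Iv;
  move: (x p.1) (x p.2) (rr x) => a b r; lia.
case: (eqVneq i p.2) => [->|i2]; first by rewrite step_v //; move: Iu Iv;
  move: (x p.1) (x p.2) (rr x) => a b r; lia.
by rewrite step_other.
Qed.

Lemma Inv_fold M n (x : loadv n) s : valid s -> Inv M x -> Inv M (foldl (@step n) x s).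
Proof.
elim: s x => [|p s IH] x //= /andP[hp hs] I.
by apply: IH => //; apply: Inv_step.
Qed.

Definition dl n (x : loadv n) i := x i - rr x.

Definition delta n (x : loadv n) (p : pairn n) : rat :=
  (hh (dl x p.1))%:R + (hh (dl x p.2))%:R
  - (hh ((dl x p.1 + dl x p.2 + 1) %/ 2)%Z)%:R - (hh ((dl x p.1 + dl x p.2) %/ 2)%Z)%:R.

Lemma Psi_step n (x : loadv n) p : p.1 != p.2 -> Psi (step x p) = Psi x - delta x p.
Proof.
move=> h; rewrite /Psi rr_step //.
rewrite (sum_two h (f := fun i => (hh (x i - rr x))%:R)); last first.
  by move=> i i1 i2; rewrite step_other.
rewrite step_u step_v // /delta /dl.
have -> : ((x p.1 + x p.2 + 1) %/ 2)%Z - rr x = ((x p.1 - rr x + (x p.2 - rr x) + 1) %/ 2)%Z.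
  by move: (x p.1) (x p.2) (rr x) => a b r; lia.
have -> : ((x p.1 + x p.2) %/ 2)%Z - rr x = ((x p.1 - rr x + (x p.2 - rr x)) %/ 2)%Z.
  by move: (x p.1) (x p.2) (rr x) => a b r; lia.
ring.
Qed.

Lemma delta_ge0 n (x : loadv n) p : 0 <= delta x p.
Proof.
rewrite /delta.
have := hh_avg (dl x p.1) (dl x p.2).
move: (hh _) (hh _) (hh _) (hh _) => a b c d h.
rewrite -natrD -addrA -opprD -natrD subr_ge0 ler_nat; lia.
Qed.

End Drift.


Section Count.
Variable R : archiRealFieldType.

Lemma sum_dl n (x : loadv n) : \sum_j dl R x j = sumL x - n%:Z * rr R x.
Proof.
rewrite /dl sumrB sumr_const card_ord /sumL.
by rewrite -mulr_natl natz.
Qed.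

Lemma sum_posz n (F : 'I_n -> nat) : ((\sum_i F i)%N%:Z) = \sum_i (F i)%:Z.
Proof. exact: (big_morph _ PoszD (erefl _)). Qed.

Lemma sum_lin n (c : int) (b : 'I_n -> nat) :
  \sum_j (1 - c * (b j)%:Z) = n%:Z - c * (\sum_j b j)%N%:Z.
Proof. by rewrite sumrB sumr_const card_ord -mulr_sumr sum_posz -mulr_natl natz mulr1. Qed.

Lemma sum_lin2 n (c : int) (b : 'I_n -> nat) :
  \sum_j (-1 + c * (b j)%:Z) = - n%:Z + c * (\sum_j b j)%N%:Z.
Proof.
rewrite big_split /= sumr_const card_ord -mulr_sumr sum_posz -mulr_natl natz.
by rewrite mulrN1.
Qed.

Lemma count_bounds M n (x : loadv n) : (0 < n)%N -> Inv R M x ->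
  (n < 2 * M.+1 * \sum_j (nat_of_bool (dl R x j <= 0)%R))%N /\
  (n <= 2 * M.+1 * \sum_j (nat_of_bool (0 <= dl R x j)%R))%N.
Proof.
move=> n0 I.
have [h1 h2] := round_bounds R (sumL x) n0.
have Er : roundR ((sumL x)%:~R / n%:R : R) = rr R x by [].
rewrite Er in h1 h2.
have Sd := sum_dl x.
have L1 : \sum_j (1 - (M.+1)%:Z * (nat_of_bool (dl R x j <= 0)%R)%:Z) <= \sum_j dl R x j.
  apply: ler_sum => j _; have := I j; rewrite /dl.
  by case: (lerP (x j - rr R x) 0) => /= h; lia.
have L2 : \sum_j dl R x j <= \sum_j (-1 + (M.+1)%:Z * (nat_of_bool (0 <= dl R x j)%R)%:Z).
  apply: ler_sum => j _; have := I j; rewrite /dl.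
  by case: (lerP 0 (x j - rr R x)) => /= h; lia.
rewrite sum_lin in L1; rewrite sum_lin2 in L2.
move: L1 L2 Sd h1 h2.
move: (\sum_j dl R x j) (\sum_j (nat_of_bool (dl R x j <= 0)%R))%N (\sum_j (nat_of_bool (0 <= dl R x j)%R))%N
  (sumL x) (rr R x) => D k1 k2 S r.
lia.
Qed.
End Count.


Section D2.
Variable R : archiRealFieldType.

Definition goodp n (x : loadv n) (p : pairn n) : bool :=
  ((2 <= dl R x p.1) && (dl R x p.2 <= 0)) || ((dl R x p.1 <= -2) && (0 <= dl R x p.2)).

Lemma delta_good n (x : loadv n) p : goodp x p ->
  (hh (dl R x p.1))%:R <= 2 * delta R x p.
Proof.
move=> g.
have := @hh_progress (dl R x p.1) (dl R x p.2).
rewrite /delta.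
have H : (2 <= dl R x p.1 /\ dl R x p.2 <= 0) \/ (dl R x p.1 <= -2 /\ 0 <= dl R x p.2).
  by move: g; rewrite /goodp => /orP[/andP[a b]|/andP[a b]]; [left|right].
move=> /(_ H).
move: (hh (dl R x p.1)) (hh (dl R x p.2)) (hh ((dl R x p.1 + dl R x p.2 + 1) %/ 2)%Z)
  (hh ((dl R x p.1 + dl R x p.2) %/ 2)%Z) => a b c d h.
move: h; rewrite -(ler_nat rat) !natrD; lra.
Qed.

Lemma hh_small (d : int) : ~~ (2 <= d) -> ~~ (d <= -2) -> hh d = 0%N.
Proof. by move=> h1 h2; rewrite /hh /g ifF //; apply/negbTE; lia. Qed.

Lemma sum_ind_nat n (b : 'I_n -> bool) (c : rat) :
  \sum_j c * (nat_of_bool (b j))%:R = c * (\sum_j nat_of_bool (b j))%N%:R.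
Proof. by rewrite -mulr_sumr natr_sum. Qed.

Lemma per_i M n (x : loadv n) i : (0 < n)%N -> Inv R M x ->
  n%:R * (hh (dl R x i))%:R <=
  2 * (2 * M.+1)%:R * \sum_j (if goodp x (i, j) then delta R x (i, j) else 0).
Proof.
move=> n0 I.
have [k1 k2] := count_bounds n0 I.
have S0 : 0 <= \sum_j (if goodp x (i, j) then delta R x (i, j) else 0).
  by apply: sumr_ge0 => j _; case: ifP => // _; apply: delta_ge0.
set h := (hh (dl R x i))%:R.
have h0 : 0 <= h by rewrite /h ler0n.
case: (boolP (2 <= dl R x i)) => d2.
  have L : h / 2 * (\sum_j nat_of_bool (dl R x j <= 0)%R)%N%:R <=
           \sum_j (if goodp x (i, j) then delta R x (i, j) else 0).
    rewrite -sum_ind_nat; apply: ler_sum => j _.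
    case: (boolP (dl R x j <= 0)) => dj /=.
      have gp : goodp x (i, j) by rewrite /goodp /= d2 dj.
      rewrite gp mulr1; have := delta_good gp; rewrite /= -/h; lra.
    by rewrite mulr0; case: ifP => // _; apply: delta_ge0.
  move: k1; rewrite -(ltr_nat rat) !natrM => k1.
  move: L k1; move: (\sum_j _) ((\sum_j _)%N%:R) => Sg K L k1.
  have hn : n%:R * h <= 2%:R * M.+1%:R * K * h by apply: ler_wpM2r => //; apply: ltW.
  have M0 : (0 : rat) <= M.+1%:R by rewrite ler0n.
  have := ler_wpM2l M0 L; lra.
case: (boolP (dl R x i <= -2)) => d3.
  have L : h / 2 * (\sum_j nat_of_bool (0 <= dl R x j)%R)%N%:R <=
           \sum_j (if goodp x (i, j) then delta R x (i, j) else 0).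
    rewrite -sum_ind_nat; apply: ler_sum => j _.
    case: (boolP (0 <= dl R x j)) => dj /=.
      have gp : goodp x (i, j) by rewrite /goodp /= d3 dj orbT.
      rewrite gp mulr1; have := delta_good gp; rewrite /= -/h; lra.
    by rewrite mulr0; case: ifP => // _; apply: delta_ge0.
  move: k2; rewrite -(ler_nat rat) !natrM => k2.
  move: L k2; move: (\sum_j _) ((\sum_j _)%N%:R) => Sg K L k2.
  have hn : n%:R * h <= 2%:R * M.+1%:R * K * h by apply: ler_wpM2r.
  have M0 : (0 : rat) <= M.+1%:R by rewrite ler0n.
  have := ler_wpM2l M0 L; lra.
rewrite /h hh_small // mulr0.
apply: mulr_ge0 => //; apply: mulr_ge0 => //.
Qed.

End D2.


Section D3.
Variable R : archiRealFieldType.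

Definition vp n (p : pairn n) : bool := p.1 != p.2.

Lemma good_valid n (x : loadv n) p : goodp R x p -> vp p.
Proof.
rewrite /goodp /vp; apply: contraTN => /eqP ->; apply/negP.
by move=> /orP[/andP[a b]|/andP[a b]]; lia.
Qed.

Lemma Qc_le n : Qc (@vp n) <= (n * n)%:R.
Proof.
rewrite /Qc; apply: le_trans (_ : \sum_(p : pairn n) 1 <= _).
  rewrite [X in _ <= X](bigID (@vp n)) /= lerDl; exact: sumr_ge0.
by rewrite sumr_const card_prod card_ord.
Qed.

Lemma sum_delta M n (x : loadv n) : (0 < n)%N -> Inv R M x ->
  n%:R * Psi R x <= 2 * (2 * M.+1)%:R * \sum_(p | vp p) delta R x p.
Proof.
move=> n0 I.
rewrite /Psi mulr_sumr.
apply: le_trans (_ : \sum_i 2 * (2 * M.+1)%:R *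
    \sum_j (if goodp R x (i, j) then delta R x (i, j) else 0) <= _).
  apply: ler_sum => i _; exact: per_i.
rewrite -mulr_sumr; apply: ler_wpM2l; first by apply: mulr_ge0; rewrite ler0n.
rewrite pair_big /= [X in _ <= X]big_mkcond /=; apply: ler_sum => -[i j] _ /=.
case: ifP => g; first by rewrite (good_valid g).
by case: ifP => // _; apply: delta_ge0.
Qed.

Lemma drift M n (x : loadv n) : (0 < n)%N -> Inv R M x ->
  \sum_(p | vp p) Psi R (step x p) <=
  Qc (@vp n) * (1 - ((n * (4 * M.+1))%:R)^-1) * Psi R x.
Proof.
move=> n0 I.
have -> : \sum_(p | vp p) Psi R (step x p) = Qc (@vp n) * Psi R x - \sum_(p | vp p) delta R x p.
  rewrite (eq_bigr (fun p => Psi R x - delta R x p)); last by move=> p hp; apply: Psi_step.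
  by rewrite sumrB /Qc mulr_suml; congr (_ - _); apply: eq_bigr => *; rewrite mul1r.
have SD := sum_delta n0 I.
have Q1 := Qc_le n.
have Q0 : 0 <= Qc (@vp n) by apply: sumr_ge0.
have P0 : 0 <= Psi R x by apply: sumr_ge0.
move: SD Q1 Q0 P0; move: (\sum_(p | vp p) delta R x p) (Qc (@vp n)) (Psi R x) => D Q P SD Q1 Q0 P0.
have np : (0 : rat) < n%:R by rewrite ltr0n.
rewrite !natrM in SD Q1 *.
set m := M.+1%:R in SD *.
have m0 : (0 : rat) < m by rewrite /m ltr0n.
set N := (n%:R : rat) in SD Q1 np *.
have -> : Q * (1 - (N * (4 * m))^-1) * P = Q * P - (Q * P) / (N * (4 * m)).
  field; apply/andP; split; first by rewrite addrC natr1 pnatr_eq0.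
  by rewrite pnatr_eq0 -lt0n.
suff : Q * P / (N * (4 * m)) <= D by move=> h; rewrite lerD2l lerN2.
rewrite ler_pdivrMr; last by rewrite mulr_gt0 // mulr_gt0.
have : Q * P <= N * N * P by apply: ler_wpM2r.
have : N * (N * P) <= N * (2 * (2 * m) * D) by apply: ler_wpM2l => //; apply: ltW.
lra.
Qed.
End D3.


Lemma pow_bern (a : rat) k : 0 <= a -> a <= 1 -> (1 - a) ^+ k * (1 + k%:R * a) <= 1.
Proof.
move=> a0 a1; elim: k => [|k IH]; first by rewrite expr0 mul0r addr0 mulr1.
have p0 : 0 <= (1 - a) ^+ k by apply: exprn_ge0; lra.
rewrite exprSr -natr1.
have k0 : (0 : rat) <= k%:R by rewrite ler0n.
have H : (1 - a) * (1 + (k%:R + 1) * a) <= 1 + k%:R * a by nra.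
have := ler_wpM2l p0 H.
lra.
Qed.

Lemma rho_half (m : nat) : (0 < m)%N -> (1 - (m%:R : rat)^-1) ^+ m <= 2^-1.
Proof.
move=> m0.
have mp : (0 : rat) < m%:R by rewrite ltr0n.
have a0 : 0 <= (m%:R : rat)^-1 by rewrite invr_ge0 ltW.
have a1 : (m%:R : rat)^-1 <= 1 by rewrite invf_le1 // ler1n.
have := pow_bern m a0 a1.
rewrite mulfV ?gt_eqF //.
have p0 : 0 <= (1 - (m%:R : rat)^-1) ^+ m by apply: exprn_ge0; lra.
move: p0; move: ((1 - (m%:R : rat)^-1) ^+ m) => y p0 h.
rewrite -[2^-1]mul1r ler_pdivlMr //; lra.
Qed.

Lemma rho_pow (n M : nat) : (2 <= n)%N ->
  (1 - ((n * (4 * M.+1))%:R : rat)^-1) ^+ (4 * M.+1 * 4 * (n * trunc_log 2 n)) * (n * n)%:R <= 1.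
Proof.
move=> n2.
set m := (n * (4 * M.+1))%N.
set tl := trunc_log 2 n.
have m0 : (0 < m)%N by rewrite /m; lia.
have -> : (4 * M.+1 * 4 * (n * tl) = m * (4 * tl))%N by rewrite /m; nia.
rewrite exprM.
have r0 : 0 <= 1 - (m%:R : rat)^-1.
  have : (m%:R : rat)^-1 <= 1 by rewrite invf_le1 ?ltr0n // ler1n.
  lra.
have h1 : (1 - (m%:R : rat)^-1) ^+ m ^+ (4 * tl) <= (2^-1) ^+ (4 * tl).
  by apply: lerXn2r; rewrite ?nnegrE ?exprn_ge0 //; apply: rho_half.
have t1 : (0 < tl)%N by rewrite /tl trunc_log_gt0.
have t2 : (n < 2 ^ tl.+1)%N by apply: trunc_log_ltn.
have h2 : (n * n <= 2 ^ (4 * tl))%N.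
  have : (2 ^ tl.+1 * 2 ^ tl.+1 <= 2 ^ (4 * tl))%N.
    by rewrite -expnD leq_exp2l //; lia.
  move=> h; apply: leq_trans h; apply: leq_mul; apply: ltnW; exact: t2.
have h3 : ((n * n)%:R : rat) <= (2 ^ (4 * tl))%:R by rewrite ler_nat.
rewrite natrX in h3.
have p0 : 0 <= (1 - (m%:R : rat)^-1) ^+ m ^+ (4 * tl) by rewrite !exprn_ge0.
apply: le_trans (_ : 2^-1 ^+ (4 * tl) * 2 ^+ (4 * tl) <= 1).
  apply: le_trans (ler_wpM2l p0 h3) _.
  by apply: ler_wpM2r => //; apply: exprn_ge0.
by rewrite -exprMn mulVf // expr1n.
Qed.


Section Core.
Variable R : archiRealFieldType.

Lemma iter_bound M n (x : loadv n) L : (0 < n)%N -> Inv R M x ->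
  TW (@vp n) L (fun s => Psi R (foldl (@step n) x s)) <=
  (Qc (@vp n) * (1 - ((n * (4 * M.+1))%:R)^-1)) ^+ L * Psi R x.
Proof.
move=> n0; elim: L x => [|L IH] x I; first by rewrite TW0 expr0 mul1r.
set a := Qc (@vp n) * (1 - ((n * (4 * M.+1))%:R)^-1).
have a0 : 0 <= a.
  apply: mulr_ge0; first by apply: sumr_ge0.
  have hh1 : ((n * (4 * M.+1))%:R : rat)^-1 <= 1 by rewrite invf_le1 ?ltr0n ?ler1n; lia.
  by rewrite subr_ge0.
rewrite TWS /=.
apply: le_trans (_ : \sum_(p | vp p) a ^+ L * Psi R (step x p) <= _).
  apply: ler_sum => p hp; apply: IH; exact: Inv_step.
rewrite -mulr_sumr exprSr -mulrA; apply: ler_wpM2l; first exact: exprn_ge0.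
exact: drift.
Qed.

Lemma Psi_ge0 n (x : loadv n) : 0 <= Psi R x.
Proof. by apply: sumr_ge0. Qed.

Lemma psi_ge1 n (l : loadv n) : ~~ cond3 R l -> 1 <= Psi R l.
Proof.
rewrite /cond3 negb_forall => /existsP[i hi].
rewrite /Psi (bigD1 i) //=.
have : (1 <= hh (l i - rr R l))%N.
  rewrite /hh /g /rr; move: hi; set r := roundR (avg R l) => hi.
  rewrite ifT; first by rewrite expn_gt0.
  move: hi; move: (l i) r => a b; lia.
rewrite -(ler_nat rat) => h.
have := @sumr_ge0 _ _ (index_enum _) (fun j => j != i) (fun j => (hh (l j - rr R l))%:R : rat)
  (fun j _ => ler0n _ _).
lra.
Qed.

Lemma psi_le M n (x : loadv n) : Inv R M x -> Psi R x <= (n * 4 ^ M)%:R.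
Proof.
move=> I; rewrite /Psi.
apply: le_trans (_ : \sum_(i < n) ((4 ^ M)%N%:R : rat) <= _).
  apply: ler_sum => i _; rewrite ler_nat /hh.
  apply: leq_trans (@g_mono _ _ (I i)) _; rewrite /g; case: ifP => //.
by rewrite sumr_const card_ord natrM mulr_natl.
Qed.

Lemma core M n (x : loadv n) : (2 <= n)%N -> Inv R M x ->
  TW (@vp n) (4 * M.+1 * 4 * (n * trunc_log 2 n))
     (fun s => (nat_of_bool (~~ cond3 R (foldl (@step n) x s)))%:R) <=
  Qc (@vp n) ^+ (4 * M.+1 * 4 * (n * trunc_log 2 n)) * (4 ^ M)%N%:R / n%:R.
Proof.
move=> n2 I.
have n0 : (0 < n)%N by lia.
set D := (4 * M.+1 * 4 * (n * trunc_log 2 n))%N.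
apply: le_trans (_ : TW (@vp n) D (fun s => Psi R (foldl (@step n) x s)) <= _).
  apply: TW_le => s _ _; case: (boolP (~~ cond3 R _)) => h /=.
    exact: psi_ge1.
  exact: Psi_ge0.
apply: le_trans (iter_bound D n0 I) _.
set rho := 1 - ((n * (4 * M.+1))%:R : rat)^-1.
have hr := rho_pow M n2; rewrite -/rho -/D in hr.
have Pl := psi_le I.
have P0 := Psi_ge0 x.
have Q0 : 0 <= Qc (@vp n) ^+ D by apply: exprn_ge0; apply: sumr_ge0.
have r0 : 0 <= rho ^+ D.
  apply: exprn_ge0; rewrite /rho.
  have hh1 : ((n * (4 * M.+1))%:R : rat)^-1 <= 1 by rewrite invf_le1 ?ltr0n ?ler1n; lia.
  by rewrite subr_ge0.
rewrite exprMn -mulrA -mulrA; apply: ler_wpM2l => //.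
have np : (0 : rat) < n%:R by rewrite ltr0n.
rewrite ler_pdivlMr //.
move: hr Pl; rewrite !natrM.
have K0 : (0 : rat) <= (4 ^ M)%N%:R by apply: ler0n.
move: (rho ^+ D) r0 ((4 ^ M)%N%:R) K0 (Psi R x) P0 => y y0 K K0 P P0 hr Pl.
nra.
Qed.
End Core.


Lemma card_TW n L (E : pred (seq (pairn n))) :
  (#|[set s : L.-tuple (pairn n) | valid s && E s]|%:R : rat) =
  TW (@vp n) L (fun s => (nat_of_bool (E s))%:R).
Proof.
rewrite -sum1_card natr_sum /TW big_mkcond [RHS]big_mkcond /=.
apply: eq_bigr => s _; rewrite inE.
have -> : valid s = all (@vp n) s by [].
by case: (all _ s) => //=; case: (E s).
Qed.

Lemma first_from_congr (P P' : nat -> bool) a t :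
  (forall u, (u <= t)%N -> P u = P' u) -> first_from P a t = first_from P' a t.
Proof.
move=> H; rewrite /first_from H //; congr [&& _, _ & _].
apply: eq_forallb => j; rewrite H //; exact: ltnW.
Qed.

Lemma traj_pre n (l0 : loadv n) s1 s2 u : (u <= size s1)%N ->
  traj l0 (s1 ++ s2) u = traj l0 s1 u.
Proof.
move=> h; rewrite /traj take_cat; case: ltnP => h2 //.
have -> : u = size s1 by lia.
by rewrite subnn take0 cats0 take_size.
Qed.

Lemma traj_cat n (l0 : loadv n) s1 s2 k :
  traj l0 (s1 ++ s2) (size s1 + k) = foldl (@step n) (foldl (@step n) l0 s1) (take k s2).
Proof.
rewrite /traj take_cat ltnNge leq_addr /= addKn foldl_cat //.
Qed.

Lemma isT2_pre (R : numFieldType) (c : R) n (l0 : loadv n) s1 s2 :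
  isT2 c l0 (s1 ++ s2) (size s1) = isT2 c l0 s1 (size s1).
Proof.
rewrite /isT2; apply: eq_existsb => t1.
have ht1 : (t1 <= size s1)%N by have := ltn_ord t1; lia.
congr andb.
  rewrite /isT1; apply: first_from_congr => u hu; rewrite traj_pre //; lia.
by apply: first_from_congr => u hu; rewrite traj_pre.
Qed.

Lemma isT2_cond2 (R : numFieldType) (c : R) n (l0 : loadv n) s t :
  isT2 c l0 s t -> cond2 c (traj l0 s t).
Proof. by move=> /existsP[t1 /andP[_ /and3P[_ h _]]]. Qed.

Lemma first_from_uniq P a t t' : first_from P a t -> first_from P a t' -> t = t'.
Proof.
rewrite /first_from => /and3P[a1 p1 f1] /and3P[a2 p2 f2].
case: (ltngtP t t') => // h.
  by move/forallP: f2 => /(_ (Ordinal h)) /=; rewrite a1 p1.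
by move/forallP: f1 => /(_ (Ordinal h)) /=; rewrite a2 p2.
Qed.

Lemma isT2_uniq (R : numFieldType) (c : R) n (l0 : loadv n) s t t' :
  isT2 c l0 s t -> isT2 c l0 s t' -> t = t'.
Proof.
move=> /existsP[t1 /andP[h1 h2]] /existsP[t1' /andP[h1' h2']].
have e := first_from_uniq h1 h1'.
by rewrite e in h2; apply: first_from_uniq h2 h2'.
Qed.


Lemma inv_of_cond2 (R : archiRealFieldType) (c : R) n (x : loadv n) :
  cond2 c x -> Inv R (Num.trunc (2 * c + 1)) x.
Proof.
move=> /forallP H i.
have /andP[h1 h2] := H i.
set T := Num.trunc (2 * c + 1).
have hT : 2 * c + 1 < T.+1%:R := truncnS_gt _.
set a := avg R x in h1 h2.
have f1 : ((rr R x)%:~R : R) <= a + 2^-1 by apply: floor_le.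
have f2 : a + 2^-1 < ((rr R x + 1)%:~R : R).
  by rewrite -floor_lt_int /rr /roundR ltzD1.
rewrite intrD in f2.
have u1 : ((x i - rr R x)%:~R : R) < ((T.+1)%:Z)%:~R.
  rewrite intrB; have -> : (((T.+1)%:Z)%:~R : R) = T.+1%:R by []. lra.
have u2 : (((- (T.+1)%:Z))%:~R : R) < (x i - rr R x)%:~R.
  rewrite intrB intrN; have -> : (((T.+1)%:Z)%:~R : R) = T.+1%:R by []. lra.
rewrite ltr_int in u1; rewrite ltr_int in u2.
lia.
Qed.

Lemma per_t2 (R : archiRealFieldType) (c : R) n (l0 : loadv n) (N t2 M D : nat) :
  (2 <= n)%N -> (t2 <= N)%N -> M = Num.trunc (2 * c + 1) ->
  D = (4 * M.+1 * 4 * (n * trunc_log 2 n))%N ->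
  TW (@vp n) (N + D) (fun s => (nat_of_bool (isT2 c l0 s t2))%:R *
                            (nat_of_bool (~~ cond3 R (traj l0 s (t2 + D))))%:R)
  <= (4 ^ M)%N%:R / n%:R * TW (@vp n) (N + D) (fun s => (nat_of_bool (isT2 c l0 s t2))%:R).
Proof.
move=> n2 tN EM ED.
have -> : (N + D = t2 + (D + (N - t2)))%N by lia.
rewrite !(TW_split _ _ t2) -TW_scale.
apply: TW_le => s1 hs1 v1.
set r := (N - t2)%N.
rewrite -hs1.
under TW_eq => s' _ _ do rewrite isT2_pre traj_cat.
under [X in _ <= _ * X]TW_eq => s' _ _ do rewrite isT2_pre.
rewrite TW_scale TW_const.
set A := (nat_of_bool (isT2 c l0 s1 (size s1)))%:R.
have A0 : 0 <= A by rewrite /A ler0n.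
case: (boolP (isT2 c l0 s1 (size s1))) => hA; last first.
  by rewrite /A (negbTE hA) /= mul0r !mulr0.
have I : Inv R M (foldl (@step n) l0 s1).
  have := isT2_cond2 hA; rewrite /traj take_size => h.
  by rewrite EM; apply: inv_of_cond2 h.
rewrite TW_split.
under TW_eq => s2 hs2 _ do (under TW_eq => s3 _ _ do rewrite take_size_cat //; rewrite TW_const).
rewrite TW_scale.
have co := core n2 I; rewrite -ED in co.
have Q0 : 0 <= Qc (@vp n) by apply: sumr_ge0.
have QD : 0 <= Qc (@vp n) ^+ r by apply: exprn_ge0.
rewrite exprD.
have K0 : (0 : rat) <= (4 ^ M)%N%:R / n%:R by apply: divr_ge0; apply: ler0n.
rewrite -mulrA in co.
move: co K0 QD A0; move: (TW _ _ _) ((4 ^ M)%N%:R / n%:R) (Qc (@vp n) ^+ r) (Qc (@vp n) ^+ D) A.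
move=> T K Qr QDD a co K0 QD A0.
have aq : 0 <= a * Qr by apply: mulr_ge0.
have := ler_wpM2l aq co.
have -> : K * (QDD * Qr * a) = a * Qr * (QDD * K) by ring.
by rewrite mulrA.
Qed.


Lemma card_TW1 n L :
  (#|[set s : L.-tuple (pairn n) | valid s]|%:R : rat) = TW (@vp n) L (fun _ => 1).
Proof.
rewrite -sum1_card natr_sum /TW big_mkcond [RHS]big_mkcond /=.
apply: eq_bigr => s _; rewrite inE.
have -> : valid s = all (@vp n) s by [].
by case: (all _ s).
Qed.

Lemma sum_isT2_le1 (R : numFieldType) (c : R) n (l0 : loadv n) N s :
  \sum_(t2 < N.+1) ((nat_of_bool (isT2 c l0 s t2))%:R : rat) <= 1.
Proof.
case: (boolP [exists t2 : 'I_N.+1, isT2 c l0 s t2]).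
  move=> /existsP[t h]; rewrite (bigD1 t) //= h big1 ?addr0 //.
  move=> j hj; case: (boolP (isT2 c l0 s j)) => // hj'.
  by move/eqP: hj; case; apply: val_inj; apply: (isT2_uniq hj' h).
rewrite negb_exists => /forallP H.
by rewrite big1 // => j _; rewrite (negbTE (H j)).
Qed.

Lemma main_bound (R : archiRealFieldType) (c : R) n (l0 : loadv n) (N M D : nat) :
  (2 <= n)%N -> M = Num.trunc (2 * c + 1) ->
  D = (4 * M.+1 * 4 * (n * trunc_log 2 n))%N ->
  prob (N + D) (bad c l0 N D) <= (4 ^ M)%N%:R / n%:R.
Proof.
move=> n2 EM ED.
rewrite /prob card_TW card_TW1.
set K := (4 ^ M)%N%:R / n%:R.
have K0 : 0 <= K by apply: divr_ge0; apply: ler0n.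
set L := (N + D)%N.
have key : TW (@vp n) L (fun s => (nat_of_bool (bad c l0 N D s))%:R) <=
           K * TW (@vp n) L (fun _ => 1).
  apply: le_trans (_ : TW (@vp n) L (fun s => \sum_(t2 < N.+1)
     (nat_of_bool (isT2 c l0 s t2))%:R *
     (nat_of_bool (~~ cond3 R (traj l0 s (t2 + D))))%:R) <= _).
    apply: TW_le => s _ _.
    have S0 : forall t2 : 'I_N.+1, 0 <= ((nat_of_bool (isT2 c l0 s t2))%:R : rat) *
       (nat_of_bool (~~ cond3 R (traj l0 s (t2 + D))))%:R.
      by move=> t2; apply: mulr_ge0; apply: ler0n.
    case: (boolP (bad c l0 N D s)) => hb /=; last by apply: sumr_ge0.
    move: hb => /existsP[t /andP[h1 /forallP h2]].
    have h3 := h2 ord_max; rewrite /= in h3.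
    rewrite (bigD1 t) //= h1 h3 /= mulr1.
    have : 0 <= \sum_(i < N.+1 | i != t) ((nat_of_bool (isT2 c l0 s i))%:R : rat) *
       (nat_of_bool (~~ cond3 R (traj l0 s (i + D))))%:R by apply: sumr_ge0.
    by rewrite lerDl.
  rewrite TW_sum.
  apply: le_trans (_ : \sum_(t2 < N.+1) K * TW (@vp n) L
      (fun s => (nat_of_bool (isT2 c l0 s t2))%:R) <= _).
    apply: ler_sum => t2 _.
    by apply: (@per_t2 R c n l0 N t2 M D n2 _ EM ED); have := ltn_ord t2; lia.
  rewrite -mulr_sumr -TW_sum; apply: ler_wpM2l => //.
  apply: TW_le => s _ _; exact: sum_isT2_le1.
set B := TW _ _ _ in key *.
set Z := TW _ _ _ in key *.
have Z0 : 0 <= Z by rewrite /Z TW_const mulr1; apply: exprn_ge0; apply: sumr_ge0.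
case: (eqVneq Z 0) => hz; first by rewrite hz invr0 mulr0.
rewrite ler_pdivrMr; last by rewrite lt_def hz.
exact: key.
Qed.

Theorem lemma5 (R : archiRealFieldType) (c : R) :
  10 <= c ->
  exists C K : nat,
    forall (n : nat) (l0 : loadv n) (N : nat),
      (2 <= n)%N ->
      let D := (C * (n * trunc_log 2 n))%N in
      prob (N + D) (bad c l0 N D) <= K%:R / n%:R.
Proof.
move=> c10.
exists (4 * (Num.trunc (2 * c + 1)).+1 * 4)%N, (4 ^ Num.trunc (2 * c + 1))%N.
move=> n l0 N n2.
exact: (@main_bound R c n l0 N (Num.trunc (2 * c + 1))
  (4 * (Num.trunc (2 * c + 1)).+1 * 4 * (n * trunc_log 2 n))%N n2 erefl erefl).
Qed.
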